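(* Let $(S,\mathcal F,\mathcal L)$ be a $p$-local finite group with $S$ abelian. Then $(S,\mathcal F,\mathcal L)$ is nilpotent if and only if one of the following two conditions is satisfied: (1) two elements $a,b\in S$ are $\mathcal F$-conjugate if and only if they are equal; (2) $\mathrm{Aut}_{\mathcal F}(S)$ is the trivial group.
   Context: Elements $a,b\in S$ are $\mathcal F$-conjugate if there is $\phi\in\mathrm{Hom}_{\mathcal F}(\langle a\rangle,S)$ with $\phi(a)=b$. Let $p$ be a prime and $S$ a finite $p$-group. For $P,Q\le S$, $\mathrm{Hom}_S(P,Q)$ is the set of maps $c_g\colon x\mapsto gxg^{-1}$ with $g\in S$, $gPg^{-1}\le Q$, and $\mathrm{Aut}_S(P)=\mathrm{Hom}_S(P,P)$. A fusion system $\mathcal F$ over $S$ is a category whose objects are the subgroups of $S$, with $\mathrm{Hom}_S(P,Q)\subseteq\mathrm{Hom}_{\mathcal F}(P,Q)\subseteq \mathrm{Inj}(P,Q)$, such that every morphism factors as an $\mathcal F$-isomorphism followed by an inclusion. Subgroups are $\mathcal F$-conjugate if they are isomorphic in $\mathcal F$. $P$ is fully centralized (resp. fully normalized) if $|C_S(P)|\ge |C_S(P')|$ (resp. $|N_S(P)|\ge|N_S(P')|$) for all $P'$ $\mathcal F$-conjugate to $P$. $\mathcal F$ is saturated if (I) every fully normalized $P$ is fully centralized and $\mathrm{Aut}_S(P)$ is a Sylow $p$-subgroup of $\mathrm{Aut}_{\mathcal F}(P)$, and (II) whenever $\phi\in\mathrm{Hom}_{\mathcal F}(P,S)$ with $\phi(P)$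 fully centralized, $\phi$ extends to a morphism in $\mathcal F$ defined on $N_\phi=\{g\in N_S(P):\phi c_g\phi^{-1}\in \mathrm{Aut}_S(\phi(P))\}$. $P$ is $\mathcal F$-centric if $C_S(P')\le P'$ for all $P'$ $\mathcal F$-conjugate to $P$; $\mathcal F^c$ is the full subcategory on these. A centric linking system associated to $\mathcal F$ is a category $\mathcal L$ with objects the $\mathcal F$-centric subgroups, a functor $\pi\colon\mathcal L\to\mathcal F^c$ which is the identity on objects, and monomorphisms $\delta_P\colon P\to\mathrm{Aut}_{\mathcal L}(P)$, such that (A) $Z(P)$ (via $\delta_P$) acts freely on $\mathrm{Mor}_{\mathcal L}(P,Q)$ by composition and $\pi$ induces a bijection $\mathrm{Mor}_{\mathcal L}(P,Q)/Z(P)\to\mathrm{Hom}_{\mathcal F}(P,Q)$; (B) $\pi(\delta_P(g))=c_g$ for $g\in P$; (C) $f\circ\delta_P(g)=\delta_Q(\pi(f)(g))\circ f$ for $f\in\mathrm{Mor}_{\mathcal L}(P,Q)$, $g\in P$. A $p$-local finite group is a triple $(S,\mathcal F,\mathcal L)$ with $\mathcal F$ a saturated fusion system over $S$ and $\mathcal L$ an associated centric linking system. $(S,\mathcal F,\mathcal L)$ is called nilpotent if $\mathcal F=\mathcal F_S(S)$, the fusion system with $\mathrm{Hom}_{\mathcal F_S(S)}(P,Q)=\mathrm{Hom}_S(P,Q)$. *)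

(* Defs.v *)
From HB Require Import structures.
From mathcomp Require Import all_boot all_fingroup all_solvable.
From mathcomp Require Import boolp.
Set Implicit Arguments.
Unset Strict Implicit.
Unset Printing Implicit Defensive.
Import GroupScope.

(* A fusion system is encoded as a predicate
   F P Q phi : "phi (a map gT -> gT, only its values on P matter) is a
   morphism P -> Q of the category F", for subgroups P, Q of S. *)

Section Fusion.
Variable gT : finGroupType.
Implicit Types P Q R : {group gT}.

Definition cg (g x : gT) : gT := g * x * g^-1.

Definition injhom (P Q : {set gT}) (phi : gT -> gT) : Prop :=
  {in P &, {morph phi : x y / x * y}} /\ {in P &, injective phi} /\
  phi @: P \subset Q.

Definition HomS (S P Q : {set gT}) (phi : gT -> gT) : Prop :=
  exists2 g, g \in S & cg g @: P \subset Q /\ {in P, phi =1 cg g}.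

Definition fusion_system (S : {group gT})
    (F : {group gT} -> {group gT} -> (gT -> gT) -> Prop) : Prop :=
  [/\
      forall P Q phi psi, F P Q phi -> {in P, phi =1 psi} -> F P Q psi,
      forall P Q phi, P \subset S -> Q \subset S -> HomS S P Q phi -> F P Q phi,
      forall P Q phi, P \subset S -> Q \subset S -> F P Q phi -> injhom P Q phi,
      forall P Q R phi psi, P \subset S -> Q \subset S -> R \subset S ->
        F P Q phi -> F Q R psi -> F P R (psi \o phi)
    &
      forall P Q phi, P \subset S -> Q \subset S -> F P Q phi ->
        exists P' : {group gT}, [/\ P' \subset Q, F P P' phi &
          exists2 psi, F P' P psi &
            {in P, forall x, psi (phi x) = x} /\ {in P', forall y, phi (psi y) = y}]].

Variable S : {group gT}.
Variable F : {group gT} -> {group gT} -> (gT -> gT) -> Prop.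

Definition Fconj_sub P P' : Prop :=
  exists phi psi, [/\ F P P' phi, F P' P psi,
     {in P, forall x, psi (phi x) = x} & {in P', forall y, phi (psi y) = y}].

Definition Fconj_elt (a b : gT) : Prop :=
  exists2 phi, F <[a]>%G S phi & phi a = b.

Definition fully_centralized P : Prop :=
  forall P' : {group gT}, P' \subset S -> Fconj_sub P P' ->
    #|'C_S(P')| <= #|'C_S(P)|.

Definition fully_normalized P : Prop :=
  forall P' : {group gT}, P' \subset S -> Fconj_sub P P' ->
    #|'N_S(P')| <= #|'N_S(P)|.

(* Aut_F(P), as a set of automorphisms of P (permutations of gT fixing
   everything outside P) *)
Definition AutF P : {set {perm gT}} :=
  [set a in Aut P | `[< F P P (fun x => a x) >]].

Definition AutS P : {set {perm gT}} :=
  [set a in Aut P | `[< exists2 g, g \in 'N_S(P) & {in P, (fun x => a x) =1 cg g} >]].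

(* N_phi, for phi : P -> P' = phi(P) *)
Definition Nphi P P' (phi : gT -> gT) : {set gT} :=
  [set g in 'N_S(P) | `[< exists2 h, h \in 'N_S(P') &
       {in P, forall x, phi (cg g x) = cg h (phi x)} >]].

Definition saturated (p : nat) : Prop :=
  (forall P, P \subset S -> fully_normalized P ->
     fully_centralized P /\ p.-Sylow(AutF P) (AutS P))
  /\
  (forall P P' (phi : gT -> gT), P \subset S -> P' \subset S ->
     F P S phi -> phi @: P = P' -> fully_centralized P' ->
     forall N : {group gT}, N :=: Nphi P P' phi ->
       exists2 psi, F N S psi & {in P, psi =1 phi}).

Definition Fcentric P : Prop :=
  P \subset S /\
  forall P' : {group gT}, P' \subset S -> Fconj_sub P P' -> 'C_S(P') \subset P'.

Definition nilpotent_fusion : Prop :=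
  forall P Q phi, P \subset S -> Q \subset S -> (F P Q phi <-> HomS S P Q phi).

End Fusion.

Record centric_linking_system (gT : finGroupType) (S : {group gT})
    (F : {group gT} -> {group gT} -> (gT -> gT) -> Prop) := CLS {
  Mor : {group gT} -> {group gT} -> Type;
  comp : forall P Q R : {group gT}, Mor Q R -> Mor P Q -> Mor P R;
  idm : forall P : {group gT}, Mor P P;
  pi : forall P Q : {group gT}, Mor P Q -> gT -> gT;
  delta : forall P : {group gT}, gT -> Mor P P;
  (* category axioms on the objects = F-centric subgroups *)
  comp_assoc : forall (P Q R T : {group gT}) (f : Mor P Q) (g : Mor Q R) (h : Mor R T),
    Fcentric S F P -> Fcentric S F Q -> Fcentric S F R -> Fcentric S F T ->
    comp h (comp g f) = comp (comp h g) f;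
  comp_id_l : forall (P Q : {group gT}) (f : Mor P Q),
    Fcentric S F P -> Fcentric S F Q -> comp (idm Q) f = f;
  comp_id_r : forall (P Q : {group gT}) (f : Mor P Q),
    Fcentric S F P -> Fcentric S F Q -> comp f (idm P) = f;
  pi_mor : forall (P Q : {group gT}) (f : Mor P Q),
    Fcentric S F P -> Fcentric S F Q -> F P Q (pi f);
  pi_comp : forall (P Q R : {group gT}) (f : Mor P Q) (g : Mor Q R),
    Fcentric S F P -> Fcentric S F Q -> Fcentric S F R ->
    {in P, pi (comp g f) =1 pi g \o pi f};
  pi_id : forall P : {group gT}, Fcentric S F P -> {in P, pi (idm P) =1 id};
  delta1 : forall P : {group gT}, Fcentric S F P -> delta P 1 = idm P;
  deltaM : forall P : {group gT}, Fcentric S F P ->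
    {in P &, forall x y, delta P (x * y) = comp (delta P x) (delta P y)};
  delta_inj : forall P : {group gT}, Fcentric S F P -> {in P &, injective (delta P)};
  axA_free : forall (P Q : {group gT}) (f : Mor P Q), Fcentric S F P -> Fcentric S F Q ->
    forall z, z \in 'Z(P) -> comp f (delta P z) = f -> z = 1;
  axA_fibres : forall (P Q : {group gT}) (f f' : Mor P Q), Fcentric S F P -> Fcentric S F Q ->
    ({in P, pi f =1 pi f'} <-> exists2 z, z \in 'Z(P) & f' = comp f (delta P z));
  axA_surj : forall (P Q : {group gT}) (phi : gT -> gT), Fcentric S F P -> Fcentric S F Q ->
    F P Q phi -> exists f : Mor P Q, {in P, pi f =1 phi};
  axB : forall P : {group gT}, Fcentric S F P ->
    forall g, g \in P -> {in P, pi (delta P g) =1 cg g};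
  axC : forall (P Q : {group gT}) (f : Mor P Q), Fcentric S F P -> Fcentric S F Q ->
    forall g, g \in P -> comp f (delta P g) = comp (delta Q (pi f g)) f
}.

(* Main.v *)
Require Import Defs.
From mathcomp Require Import all_boot all_fingroup all_solvable.
From mathcomp Require Import boolp.
Import GroupScope.

Lemma cg1 (gT : finGroupType) (x : gT) : cg 1 x = x.
Proof. by rewrite /cg mul1g invg1 mulg1. Qed.

Lemma HomS1 (gT : finGroupType) (S P Q : {group gT}) (phi : gT -> gT) :
  P \subset Q -> {in P, phi =1 id} -> HomS S P Q phi.
Proof.
move=> PQ Hid; exists 1; first exact: group1.
split; last by move=> x xP; rewrite Hid // cg1.
apply/subsetP => y /imsetP [x xP ->]; rewrite cg1; exact: (subsetP PQ).
Qed.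

Theorem corollary4p9 (gT : finGroupType) (p : nat) (S : {group gT})
    (F : {group gT} -> {group gT} -> (gT -> gT) -> Prop)
    (L : centric_linking_system S F) :
  prime p -> p.-group S -> fusion_system S F -> saturated S F p ->
  abelian S ->
  (nilpotent_fusion S F <->
     ((forall a b, a \in S -> b \in S -> (Fconj_elt S F a b <-> a = b))
      \/ AutF F S = 1)).
Proof.
move=> _ _ [FE FS FI FC FF] [_ sat2] abS.
have incl : forall P Q : {group gT}, P \subset Q -> Q \subset S -> F P Q id.
  move=> P Q PQ QS; apply: FS => //; first exact: subset_trans QS.
  exact: HomS1.
split.
  move=> nil; left => a b aS bS; split.
    case=> phi Fphi <-.
    have aS' : <[a]> \subset S by rewrite cycle_subG.
    have [g gS [_ Hg]] := (nil _ _ phi aS' (subxx S)).1 Fphi.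
    rewrite Hg ?cycle_id // /cg.
    by rewrite (centsP abS g gS a aS) mulgK.
  move=> <-; exists id => //; apply: incl => //; by rewrite cycle_subG.
case.
  move=> H1 P Q phi PS QS; split; last exact: FS.
  move=> Fphi.
  have [morph [inj im]] := FI _ _ _ PS QS Fphi.
  have Hid : {in P, phi =1 id}.
    move=> x xP /=.
    have xS : x \in S := subsetP PS x xP.
    have phixQ : phi x \in Q by apply: (subsetP im); apply: imset_f.
    have phixS : phi x \in S := subsetP QS _ phixQ.
    have cxS : <[x]> \subset S by rewrite cycle_subG.
    have cxP : <[x]> \subset P by rewrite cycle_subG.
    symmetry; apply/(H1 x (phi x) xS phixS); exists phi => //.
    have F1 := FC _ _ _ _ _ cxS PS QS (incl _ _ cxP PS) Fphi.
    have F2 := FC _ _ _ _ _ cxS QS (subxx S) F1 (incl _ _ QS (subxx S)).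
    exact: F2.
  apply: HomS1 => //; apply/subsetP => x xP.
  rewrite -(Hid x xP); apply: (subsetP im); exact: imset_f.
move=> H2 P Q phi PS QS; split; last exact: FS.
move=> Fphi.
have [morph [inj im]] := FI _ _ _ PS QS Fphi.
have FphiS : F P S phi.
  exact: (FC _ _ _ _ _ PS QS (subxx S) Fphi (incl _ _ QS (subxx S))).
have [P' [P'S FP' [psi0 Fpsi0 [inv1 inv2]]]] := FF _ _ _ PS (subxx S) FphiS.
have P'S' : P' \subset S := P'S.
have [_ [_ im0]] := FI _ _ _ P'S' PS Fpsi0.
have [_ [_ im1]] := FI _ _ _ PS P'S' FP'.
have eqP' : phi @: P = P'.
  apply/eqP; rewrite eqEsubset im1 /=; apply/subsetP => y yP'.
  rewrite -(inv2 y yP'); apply: imset_f; apply: (subsetP im0); exact: imset_f.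
have fc : fully_centralized S F P'.
  move=> P'' _ _.
  have -> : 'C_S(P') = S.
    apply/setIidPl; apply: subset_trans (centS P'S').
    by [].
  exact/subset_leq_card/subsetIl.
have eqN : S :=: Nphi S P P' phi.
  apply/setP => g; rewrite inE.
  case gS: (g \in S); last by rewrite inE gS.
  have nP : g \in 'N_S(P).
    rewrite inE gS /=; exact: (subsetP (sub_abelian_norm abS PS)).
  rewrite nP asboolT //; exists 1; first exact: group1.
  move=> x xP; rewrite cg1 /cg.
  by rewrite (centsP abS g gS x (subsetP PS x xP)) mulgK.
have [psi Fpsi ext] := sat2 P P' phi PS P'S' FphiS eqP' fc S eqN.
have [mpsi [ipsi impsi]] := FI _ _ _ (subxx S) (subxx S) Fpsi.
pose f := fun x => if x \in S then psi x else x.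
have finj : injective f.
  move=> x y; rewrite /f.
  have pS : forall z, z \in S -> psi z \in S.
    by move=> z zS; apply: (subsetP impsi); apply: imset_f.
  case xS: (x \in S); case yS: (y \in S) => //.
  - exact: ipsi.
  - by move=> E; move: (pS x xS); rewrite E yS.
  - by move=> E; move: (pS y yS); rewrite -E xS.
pose a := perm finj.
have aAut : a \in Aut S.
  rewrite inE; apply/andP; split.
    apply/subsetP => x; rewrite inE permE /f.
    by case: ifP => //; rewrite eqxx.
  apply/morphicP => x y xS yS; rewrite !permE /f groupM // xS yS.
  exact: mpsi.
have aF : a \in AutF F S.
  rewrite inE aAut asboolT //; apply: (FE _ _ _ _ Fpsi).
  by move=> x xS; rewrite permE /f xS.
move: aF; rewrite H2 => /set1P a1.
have Hid : {in P, phi =1 id}.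
  move=> x xP; have xS := subsetP PS x xP.
  rewrite -ext // /=.
  have := permE finj x; rewrite -/a a1 perm1 /f xS; by move=> <-.
apply: HomS1 => //; apply/subsetP => x xP.
rewrite -(Hid x xP); apply: (subsetP im); exact: imset_f.
Qed.
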